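(* Consider the system $\Sigma$: $x_{t+1}=f_u(x_t)$ with a finite control set $\mathcal{U}$, and let $\mathcal{X}\subseteq\mathbb{R}^n$ and $\Omega\subseteq\mathcal{X}$ be compact. Suppose $\varphi(\Omega)$ is $\delta$-robustly realizable for $\Sigma$, and that there exist $\rho>0$ and inclusion functions $[f_u]$ of $f_u$ ($u\in\mathcal{U}$) with $\mathrm{wid}([f_u]([x]))\le\rho\,\mathrm{wid}([x])$ for all boxes $[x]\subseteq\mathcal{X}$ and all $u\in\mathcal{U}$. For $\varepsilon>0$ let $Y^\varepsilon$ be the interval part of the output $K$ of Algorithm 3 run with inputs $\Omega,\mathcal{X},\{[f_u]\}_{u\in\mathcal{U}},\varepsilon$. Then Algorithm 3 terminates in finitely many steps, and if $\rho\varepsilon\le\delta$ then $$\mathrm{Win}^\delta_\Sigma(\varphi(\Omega))\subseteq Y^\varepsilon\subseteq\mathrm{Win}_\Sigma(\varphi(\Omega)).$$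
   Context: For $\delta\ge0$, $\Sigma^\delta$ has transitions $x_{t+1}=f_{u_t}(x_t)+d_t$, $u_t\in\mathcal{U}$, $|d_t|\le\delta$ ($|\cdot|$ infinity norm), $f_u$ continuous; $\Sigma=\Sigma^0$. A solution is an infinite sequence of states in $\mathcal{X}$ obeying these transitions. A solution satisfies $\varphi(\Omega)$ if it is in $\Omega$ from some time on. A memoryless strategy is $\kappa:\mathbb{R}^n\to2^{\mathcal{U}}$; a control sequence conforms to it if $u_k\in\kappa(x_k)$ for all $k$. $\mathrm{Win}^\delta_\Sigma(\varphi(\Omega))$ is the set of $x_0\in\mathcal{X}$ for which some memoryless $\kappa$ makes every solution of $\Sigma^\delta$ from $x_0$ with control conforming to $\kappa$ (and any disturbances) satisfy $\varphi(\Omega)$; $\mathrm{Win}_\Sigma=\mathrm{Win}^0_\Sigma$. $\varphi(\Omega)$ is $\delta$-robustly realizable if $\mathrm{Win}^\delta_\Sigma(\varphi(\Omega))\ne\emptyset$. $\mathrm{Pre}(Y)=\{x\in\mathcal{X}:\exists u,\ f_u(x)\in Y\}$. Boxes, width and inclusion functions: a box is a product of compact intervals, $\mathrm{wid}$ its maximal side length; $[f]$ is an inclusion function of $f$ if $f([x])\subseteq[f]([x])$ and $\mathrm{wid}([f]([x]))\to0$ as $\mathrm{wid}([x])\to0$. Sets are represented as finite unions (lists) of boxes. $\textsc{CPred}(\{[f_u]\},X,Y,\varepsilon)$: start with $K=\underline{X}=\Delta X=X_c=\emptyset$ and a list of the boxes of $X$; repeatedly remove a box $[x]$: if $[f_u]([x])\cap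 Y=\emptyset$ for all $u$, add it to $X_c$; else if $[f_u]([x])\subseteq Y$ for some $u$, add $[x]$ to $\underline{X}$ and $([x],u)$ to $K$; else if $\mathrm{wid}([x])<\varepsilon$ add it to $\Delta X$; else bisect it at the midpoint of a coordinate of maximal side length and put both halves in the list. Return $(K,\underline{X},\Delta X,X_c)$. Algorithm 3 (inputs $\Omega,\mathcal{X},\{[f_u]\},\varepsilon$): $K\leftarrow\emptyset$; $\widetilde{Y}\leftarrow\emptyset$, $Y\leftarrow\mathcal{X}$; $G_1\leftarrow\mathcal{X}\setminus\Omega$, $G_2\leftarrow\mathcal{X}\cap\Omega$. While $\widetilde{Y}\ne Y$: $Y\leftarrow\widetilde{Y}$; $(K_z,\underline{Z},\Delta Z,Z_c)\leftarrow\textsc{CPred}(\{[f_u]\},G_1,Y,\varepsilon)$; $K\leftarrow K\cup K_z$; $Z\leftarrow Y\cup\underline{Z}$; $X\leftarrow\emptyset$, $\widetilde{X}\leftarrow Z\cup G_2$, $V\leftarrow G_2$, $G_2\leftarrow\emptyset$; while $\widetilde{X}\ne X$: {$X\leftarrow\widetilde{X}$; $(K_v,\underline{V},\Delta V,V_c)\leftarrow\textsc{CPred}(\{[f_u]\},V,X,\varepsilon)$; $\widetilde{X}\leftarrow Z\cup\underline{V}$; $V\leftarrow\underline{V}$; $G_2\leftarrow G_2\cup\Delta V\cup V_c$}; $K\leftarrow K\cup K_v$; $\widetilde{Y}\leftarrow X$; $G_1\leftarrow\Delta Z\cup Z_c$. Return $K$. The interval part of $K$ is the union of all boxes $[x]$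 occurring in pairs $([x],u)\in K$. *)

(* Defs.v *)
From Stdlib Require Import Reals List.
From mathcomp Require Import all_boot.

Set Implicit Arguments.
Unset Strict Implicit.
Unset Printing Implicit Defensive.

Local Open Scope R_scope.

Definition pt (n : nat) := 'I_n -> R.
Definition box (n : nat) := (pt n * pt n)%type.
Definition pset (n : nat) := pt n -> Prop.

Definition valid_box {n} (b : box n) : Prop := forall i, fst b i <= snd b i.
Definition in_box {n} (b : box n) (x : pt n) : Prop :=
  forall i, fst b i <= x i <= snd b i.

Definition side {n} (b : box n) (i : 'I_n) : R := snd b i - fst b i.
Definition wid {n} (b : box n) : R :=
  List.fold_right Rmax 0 (List.map (side b) (enum 'I_n)).

Definition boxes_set {n} (l : list (box n)) : pset n :=
  fun x => exists b, List.In b l /\ in_box b x.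

Definition pset_sub {n} (A B : pset n) : Prop := forall x, A x -> B x.
Definition seteq {n} (A B : pset n) : Prop := forall x, A x <-> B x.

Definition continuous_map {n} (g : pt n -> pt n) : Prop :=
  forall x e, 0 < e -> exists eta, 0 < eta /\
    forall y, (forall i, Rabs (y i - x i) < eta) ->
      forall i, Rabs (g y i - g x i) < e.

Definition inclusion_function {n} (g : pt n -> pt n) (G : box n -> box n) : Prop :=
  (forall b, valid_box b -> forall x, in_box b x -> in_box (G b) (g x)) /\
  (forall e, 0 < e -> exists eta, 0 < eta /\
     forall b, valid_box b -> wid b < eta -> wid (G b) < e).

(* Winning set Win^delta of the reach-and-stay specification phi(Omega)
   for Sigma^delta : x_{t+1} = f_{u_t}(x_t) + d_t, |d_t|_inf <= delta. *)
Definition Win {n} {U : finType} (f : U -> pt n -> pt n) (X Om : pset n)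
    (delta : R) : pset n :=
  fun x0 => X x0 /\
    exists kappa : pt n -> U -> Prop,
      (forall x, exists u, kappa x u) /\
      forall (xs : nat -> pt n) (us : nat -> U) (ds : nat -> pt n),
        xs 0%nat = x0 ->
        (forall k, kappa (xs k) (us k) /\ (forall i, Rabs (ds k i) <= delta) /\
                   forall i, xs (S k) i = f (us k) (xs k) i + ds k i) ->
        (forall k, X (xs k)) /\
        exists N, forall k, (N <= k)%coq_nat -> Om (xs k).

Definition bisect {n} (sel : box n -> nat) (b : box n) : box n * box n :=
  let mid := fun i => (fst b i + snd b i) / 2 in
  ((fst b, fun j => if nat_of_ord j == sel b then mid j else snd b j),
   (fun j => if nat_of_ord j == sel b then mid j else fst b j, snd b)).

Definition sel_ok {n} (sel : box n -> nat) : Prop :=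
  forall b : box n, (0 < n)%N ->
    exists i : 'I_n, nat_of_ord i = sel b /\ forall j, side b j <= side b i.

Section Algo.
Context {n : nat} {U : finType}.
Variables (F : U -> box n -> box n) (eps : R) (sel : box n -> nat).

Definition disjoint_from (b : box n) (Y : pset n) : Prop :=
  forall x, in_box b x -> ~ Y x.
Definition box_sub (b : box n) (Y : pset n) : Prop :=
  forall x, in_box b x -> Y x.

(* CPred, big-step semantics: [cpred Y todo K Xl DX Xc K' Xl' DX' Xc'] means
   processing the list [todo] starting from accumulators (K,Xl,DX,Xc) ends
   with (K',Xl',DX',Xc'). *)
Inductive cpred (Y : pset n) :
  list (box n) -> list (box n * U) -> list (box n) -> list (box n) -> list (box n) ->
  list (box n * U) -> list (box n) -> list (box n) -> list (box n) -> Prop :=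
| cpred_done K Xl DX Xc : cpred Y nil K Xl DX Xc K Xl DX Xc
| cpred_out b rest K Xl DX Xc K' Xl' DX' Xc' :
    (forall u, disjoint_from (F u b) Y) ->
    cpred Y rest K Xl DX (b :: Xc) K' Xl' DX' Xc' ->
    cpred Y (b :: rest) K Xl DX Xc K' Xl' DX' Xc'
| cpred_in b u rest K Xl DX Xc K' Xl' DX' Xc' :
    ~ (forall v, disjoint_from (F v b) Y) ->
    box_sub (F u b) Y ->
    cpred Y rest ((b, u) :: K) (b :: Xl) DX Xc K' Xl' DX' Xc' ->
    cpred Y (b :: rest) K Xl DX Xc K' Xl' DX' Xc'
| cpred_small b rest K Xl DX Xc K' Xl' DX' Xc' :
    ~ (forall v, disjoint_from (F v b) Y) ->
    ~ (exists v, box_sub (F v b) Y) ->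
    wid b < eps ->
    cpred Y rest K Xl (b :: DX) Xc K' Xl' DX' Xc' ->
    cpred Y (b :: rest) K Xl DX Xc K' Xl' DX' Xc'
| cpred_split b rest K Xl DX Xc K' Xl' DX' Xc' :
    ~ (forall v, disjoint_from (F v b) Y) ->
    ~ (exists v, box_sub (F v b) Y) ->
    ~ (wid b < eps) ->
    cpred Y (fst (bisect sel b) :: snd (bisect sel b) :: rest) K Xl DX Xc K' Xl' DX' Xc' ->
    cpred Y (b :: rest) K Xl DX Xc K' Xl' DX' Xc'.

Definition CPred (Xin : list (box n)) (Y : list (box n))
    (K : list (box n * U)) (Xl DX Xc : list (box n)) : Prop :=
  cpred (boxes_set Y) Xin nil nil nil nil K Xl DX Xc.

(* Inner while-loop of Algorithm 3.  State: (X, Xtil, V, G2, Kv);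
   result: final (X, Kv, G2). *)
Inductive inner (Z : list (box n)) :
  list (box n) -> list (box n) -> list (box n) -> list (box n) -> list (box n * U) ->
  list (box n) -> list (box n * U) -> list (box n) -> Prop :=
| inner_stop X Xt V G2 Kv :
    seteq (boxes_set Xt) (boxes_set X) ->
    inner Z X Xt V G2 Kv X Kv G2
| inner_step X Xt V G2 Kv Kv' Vl DV Vc Xf Kvf G2f :
    ~ seteq (boxes_set Xt) (boxes_set X) ->
    CPred V Xt Kv' Vl DV Vc ->
    inner Z Xt (Z ++ Vl) Vl (G2 ++ DV ++ Vc) Kv' Xf Kvf G2f ->
    inner Z X Xt V G2 Kv Xf Kvf G2f.

(* Outer while-loop of Algorithm 3.  State: (K, Ytil, Y, G1, G2);
   result: the returned K. *)
Inductive outer :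
  list (box n * U) -> list (box n) -> pset n -> list (box n) -> list (box n) ->
  list (box n * U) -> Prop :=
| outer_stop K Yt Y G1 G2 :
    seteq (boxes_set Yt) Y -> outer K Yt Y G1 G2 K
| outer_step K Yt Y G1 G2 Kz Zl DZ Zc Xf Kv G2' Kf :
    ~ seteq (boxes_set Yt) Y ->
    CPred G1 Yt Kz Zl DZ Zc ->
    inner (Yt ++ Zl) nil ((Yt ++ Zl) ++ G2) G2 nil nil Xf Kv G2' ->
    outer ((K ++ Kz) ++ Kv) Xf (boxes_set Yt) (DZ ++ Zc) G2' Kf ->
    outer K Yt Y G1 G2 Kf.

(* Algorithm 3 with inputs Omega, X (as the initial box lists
   G1 = X \ Omega, G2 = X /\ Omega and the set X), {[f_u]}, eps: returns K. *)
Definition algorithm3 (X : pset n) (G1 G2 : list (box n)) (K : list (box n * U)) : Prop :=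
  outer nil nil X G1 G2 K.

End Algo.

Definition interval_part {n} {U : finType} (K : list (box n * U)) : pset n :=
  fun x => exists b u, List.In (b, u) K /\ in_box b x.

(* Main.v *)
Require Import Defs.
From Stdlib Require Import Reals List Lra Lia Classical ClassicalEpsilon FunctionalExtensionality Wf_nat.
From mathcomp Require Import all_boot zify.
Set Implicit Arguments.
Unset Strict Implicit.
Local Open Scope R_scope.



Section Bis.
Context {n : nat} (sel : box n -> nat).

Lemma bisect_valid1 (b : box n) : valid_box b -> valid_box (fst (bisect sel b)).
Proof. move=> V i /=. case: (_ == _) => //; have := V i; lra. Qed.
Lemma bisect_valid2 (b : box n) : valid_box b -> valid_box (snd (bisect sel b)).
Proof. move=> V i /=. case: (_ == _) => //; have := V i; lra. Qed.
Lemma bisect_sub1 (b : box n) x : valid_box b -> in_box (fst (bisect sel b)) x -> in_box b x.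
Proof. move=> V H i. have := H i; have := V i => /=; case: (_ == _) => /=; lra. Qed.
Lemma bisect_sub2 (b : box n) x : valid_box b -> in_box (snd (bisect sel b)) x -> in_box b x.
Proof. move=> V H i. have := H i; have := V i => /=; case: (_ == _) => /=; lra. Qed.
Lemma bisect_cover (b : box n) x : in_box b x ->
  in_box (fst (bisect sel b)) x \/ in_box (snd (bisect sel b)) x.
Proof.
  move=> H.
  destruct (classic (forall j : 'I_n, nat_of_ord j = sel b -> x j <= (fst b j + snd b j)/2)) as [A|A].
  - left => j /=. have := H j. case E: (_ == _) => //=. move/eqP: E => E.
    have := A j E. lra.
  - right. apply not_all_ex_not in A as [j A].
    apply imply_to_and in A as [Ej A]. apply Rnot_le_lt in A.
    move=> k /=. have := H k. case E: (_ == _) => //=. move/eqP: E => E.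
    have jk : j = k by apply/val_inj; rewrite /= Ej E.
    subst k. lra.
Qed.
Lemma bisect_side1 (b : box n) j : side (fst (bisect sel b)) j =
  if nat_of_ord j == sel b then side b j / 2 else side b j.
Proof. rewrite /side /=. case: (_ == _) => //; lra. Qed.
Lemma bisect_side2 (b : box n) j : side (snd (bisect sel b)) j =
  if nat_of_ord j == sel b then side b j / 2 else side b j.
Proof. rewrite /side /=. case: (_ == _) => //; lra. Qed.
End Bis.


Lemma in_memP (T : eqType) (x : T) (s : seq T) : x \in s -> List.In x s.
Proof.
  elim: s => [//|a l IH]; rewrite inE => /orP [/eqP ->|H]; [by left|by right; auto].
Qed.
Lemma wid_le_max n (b : box n) c : 0 <= c -> (forall i, side b i <= c) -> wid b <= c.
Proof.
  move=> c0 H. unfold wid. elim: (enum 'I_n) => [|a l IH] /=; [lra|].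
  apply Rmax_lub; auto.
Qed.
Lemma side_le_wid0 n (b : box n) i : side b i <= wid b.
Proof.
  unfold wid.
  have : List.In i (enum 'I_n).
  { apply in_memP. by rewrite mem_enum. }
  elim: (enum 'I_n) => [//|a l IH] /= [->|H].
  - apply Rmax_l.
  - eapply Rle_trans; [apply IH, H | apply Rmax_r].
Qed.

Lemma INR_le_pow2 N : INR N <= 2 ^ N.
Proof.
  elim: N => [|N IH]; first by simpl; lra.
  rewrite S_INR /=. have : 1 <= 2 ^ N by apply pow_R1_Rle; lra. lra.
Qed.

Section Meas.
Context {n : nat} (eps : R) (sel : box n -> nat).
Hypothesis Hsel : sel_ok sel.
Hypothesis Heps : 0 < eps.

Lemma big_side (b : box n) : valid_box b -> ~ wid b < eps ->
  exists i0 : 'I_n, nat_of_ord i0 = sel b /\ eps <= side b i0.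
Proof.
  move=> V W. case: (posnP n) => [n0|n0].
  - exfalso; apply W. apply Rle_lt_trans with 0; last lra.
    apply wid_le_max; first lra. move=> [i Hi]. exfalso. by rewrite n0 in Hi.
  - have [i0 [E M]] := Hsel b n0. exists i0; split => //.
    have V0 : 0 <= side b i0 by have := V i0; rewrite /side; lra.
    have := @wid_le_max _ b _ V0 M. lra.
Qed.

Definition Bnd (b : box n) (m : 'I_n -> nat) := forall i, side b i < eps * 2 ^ (m i).

Lemma split_measure (b : box n) m : valid_box b -> Bnd b m -> ~ wid b < eps ->
  exists m', Bnd (fst (bisect sel b)) m' /\ Bnd (snd (bisect sel b)) m' /\
    (\sum_(i < n) m' i < \sum_(i < n) m i)%N.
Proof.
  move=> V B W. have [i0 [E S]] := big_side V W.
  have m0 : (0 < m i0)%N.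
  { case E0: (m i0) => [|k] //. have := B i0. rewrite E0 /=. lra. }
  exists (fun j => if nat_of_ord j == sel b then (m j).-1 else m j).
  have Hb : forall j, side b j / 2 < eps * 2 ^ (m j).-1 \/ nat_of_ord j <> sel b.
  { move=> j. case: (eqVneq (nat_of_ord j) (sel b)) => [Ej|Ej]; last by right; apply/eqP.
    left. have jk : j = i0 by apply/val_inj; rewrite /= Ej E.
    subst j. have := B i0. case: (m i0) m0 => [//|k] _ /=. lra. }
  split; [|split].
  - move=> j. rewrite bisect_side1. case Ej: (_ == _).
    + case: (Hb j) => //. by move/eqP: Ej.
    + apply B.
  - move=> j. rewrite bisect_side2. case Ej: (_ == _).
    + case: (Hb j) => //. by move/eqP: Ej.
    + apply B.
  - rewrite (bigD1 i0) //= (bigD1 i0 (P := xpredT)) //=.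
    rewrite E eqxx.
    rewrite (eq_bigr (fun j => m j)); last first.
    { move=> j /= Hj. case Ej: (_ == _) => //. exfalso. move/eqP: Ej => Ej.
      have jk : j = i0 by apply/val_inj; rewrite /= Ej E.
      by rewrite jk eqxx in Hj. }
    rewrite ltn_add2r. by rewrite prednK.
Qed.

Lemma bnd_exists (b : box n) : exists m, Bnd b m.
Proof.
  have [N HN] := INR_unbounded (wid b / eps).
  exists (fun _ => N) => i.
  have := side_le_wid0 b i. have := INR_le_pow2 N.
  have : wid b < eps * INR N.
  { apply (Rmult_lt_compat_l eps) in HN; last lra.
    by field_simplify in HN; lra. }
  move=> H1 H2 H3. have : eps * INR N <= eps * 2 ^ N by apply Rmult_le_compat_l; lra.
  lra.
Qed.
End Meas.




Section CP.
Context {n : nat} {U : finType} (F : U -> box n -> box n) (eps : R) (sel : box n -> nat).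

Definition CPspec (P : box n -> Prop) (Y : pset n) (todo : list (box n))
  (K : list (box n * U)) (Xl DX Xc : list (box n))
  (K' : list (box n * U)) (Xl' DX' Xc' : list (box n)) : Prop :=
  (forall p, In p K -> In p K') /\
  (forall b u, In (b,u) K' -> In (b,u) K \/ (P b /\ box_sub (F u b) Y)) /\
  (forall b, In b Xl' -> In b Xl \/ (P b /\ exists u, In (b,u) K')) /\
  (forall b, In b DX' -> In b DX \/ (P b /\ wid b < eps /\ ~ (exists v, box_sub (F v b) Y))) /\
  (forall b, In b Xc' -> In b Xc \/ (P b /\ forall v, disjoint_from (F v b) Y)) /\
  (forall b, In b Xl -> In b Xl') /\ (forall b, In b DX -> In b DX') /\
  (forall b, In b Xc -> In b Xc') /\
  (forall x, boxes_set todo x -> boxes_set Xl' x \/ boxes_set DX' x \/ boxes_set Xc' x).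

Lemma cpred_spec (P : box n -> Prop) Y todo K Xl DX Xc K' Xl' DX' Xc' :
  cpred F eps sel Y todo K Xl DX Xc K' Xl' DX' Xc' ->
  (forall b, P b -> ~ wid b < eps -> P (fst (bisect sel b)) /\ P (snd (bisect sel b))) ->
  (forall b, In b todo -> P b) ->
  CPspec P Y todo K Xl DX Xc K' Xl' DX' Xc'.
Proof.
  move=> H Hcl. rewrite /CPspec.
  elim: H => {todo K Xl DX Xc K' Xl' DX' Xc'}.
  - move=> K Xl DX Xc _. do 8 (split; [by auto|]).
    by move=> x [b [[] _]].
  - move=> b rest K Xl DX Xc K' Xl' DX' Xc' Hd _ IH Ht.
    have Pb : P b by apply Ht; left.
    have [h1 [h2 [h3 [h4 [h5 [h6 [h7 [h8 h9]]]]]]]] := IH (fun c Hc => Ht c (or_intror Hc)).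
    split; [done|split; [done|split; [done|split; [done|split]]]].
    + move=> c Hc. case: (h5 c Hc) => [[<-|H]|H]; auto.
    + split; [done|split; [done|split]].
      * move=> c Hc; apply h8; by right.
      * move=> x [c [[<-|Hc] Hx]].
        -- right; right. exists b; split => //. apply h8; by left.
        -- apply h9. by exists c.
  - move=> b u rest K Xl DX Xc K' Xl' DX' Xc' Hnd Hs _ IH Ht.
    have Pb : P b by apply Ht; left.
    have [h1 [h2 [h3 [h4 [h5 [h6 [h7 [h8 h9]]]]]]]] := IH (fun c Hc => Ht c (or_intror Hc)).
    split; [move=> p Hp; apply h1; by right|split].
    + move=> c v Hc. case: (h2 c v Hc) => [[E|H]|H]; auto. case: E => <- <-. auto.
    + split; [|split; [done|split; [done|split]]].
      * move=> c Hc. case: (h3 c Hc) => [[<-|H]|H]; auto. right; split => //.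
        exists u. apply h1; by left.
      * move=> c Hc; apply h6; by right.
      * split; [done|split; [done|]].
        move=> x [c [[<-|Hc] Hx]].
        -- left. exists b; split => //. apply h6; by left.
        -- apply h9. by exists c.
  - move=> b rest K Xl DX Xc K' Xl' DX' Xc' Hnd Hns Hw _ IH Ht.
    have Pb : P b by apply Ht; left.
    have [h1 [h2 [h3 [h4 [h5 [h6 [h7 [h8 h9]]]]]]]] := IH (fun c Hc => Ht c (or_intror Hc)).
    split; [done|split; [done|split; [done|split]]].
    + move=> c Hc. case: (h4 c Hc) => [[<-|H]|H]; auto.
    + split; [done|split; [done|split; [move=> c Hc; apply h7; by right|split; [done|]]]].
      move=> x [c [[<-|Hc] Hx]].
      * right; left. exists b; split => //. apply h7; by left.
      * apply h9. by exists c.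
  - move=> b rest K Xl DX Xc K' Xl' DX' Xc' Hnd Hns Hw _ IH Ht.
    have Pb : P b by apply Ht; left.
    have [P1 P2] := Hcl b Pb Hw.
    have [h1 [h2 [h3 [h4 [h5 [h6 [h7 [h8 h9]]]]]]]] :
      CPspec P Y (fst (bisect sel b) :: snd (bisect sel b) :: rest) K Xl DX Xc K' Xl' DX' Xc'.
    { apply IH. move=> c [<-|[<-|Hc]] //. apply Ht; by right. }
    do 8 (split; [done|]).
    move=> x [c [[<-|Hc] Hx]].
    * case: (bisect_cover sel Hx) => Hx'; apply h9.
      -- exists (fst (bisect sel b)); split; [left; reflexivity|exact Hx'].
      -- exists (snd (bisect sel b)); split; [right; left; reflexivity|exact Hx'].
    * apply h9. exists c; split => //; by right; right.
Qed.
End CP.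







Section Term.
Context {n : nat} {U : finType} (F : U -> box n -> box n) (eps : R) (sel : box n -> nat).
Hypothesis Hsel : sel_ok sel.
Hypothesis Heps : 0 < eps.

Definition Term (Y : pset n) (l : list (box n)) : Prop :=
  forall (K : list (box n * U)) Xl DX Xc, exists K' Xl' DX' Xc',
    cpred F eps sel Y l K Xl DX Xc K' Xl' DX' Xc'.

Lemma term_cons Y : forall s (b : box n) m, valid_box b -> Bnd eps b m ->
  (\sum_(i < n) m i)%N = s -> forall rest, Term Y rest -> Term Y (b :: rest).
Proof.
  move=> s. induction s as [s IH] using (well_founded_induction lt_wf).
  move=> b m V B Hs rest Hr K Xl DX Xc.
  destruct (classic (forall u, disjoint_from (F u b) Y)) as [Hd|Hd].
  { have [K' [Xl' [DX' [Xc' H]]]] := Hr K Xl DX (b :: Xc).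
    exists K', Xl', DX', Xc'. by apply cpred_out. }
  destruct (classic (exists v, box_sub (F v b) Y)) as [[v Hv]|Hv].
  { have [K' [Xl' [DX' [Xc' H]]]] := Hr ((b, v) :: K) (b :: Xl) DX Xc.
    exists K', Xl', DX', Xc'. by eapply cpred_in; eauto. }
  destruct (Rlt_dec (wid b) eps) as [Hw|Hw].
  { have [K' [Xl' [DX' [Xc' H]]]] := Hr K Xl (b :: DX) Xc.
    exists K', Xl', DX', Xc'. by apply cpred_small. }
  have [m' [B1 [B2 Hlt]]] := split_measure Hsel Heps V B Hw.
  have Hlt' : (\sum_(i < n) m' i < s)%coq_nat by apply/ltP; rewrite -Hs.
  have T2 : Term Y (snd (bisect sel b) :: rest).
  { eapply IH; [exact Hlt'| apply bisect_valid2, V | exact B2 | reflexivity | exact Hr]. }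
  have T1 : Term Y (fst (bisect sel b) :: snd (bisect sel b) :: rest).
  { eapply IH; [exact Hlt'| apply bisect_valid1, V | exact B1 | reflexivity | exact T2]. }
  have [K' [Xl' [DX' [Xc' H]]]] := T1 K Xl DX Xc.
  exists K', Xl', DX', Xc'. by apply cpred_split.
Qed.

Lemma cpred_exists Y (l : list (box n)) : (forall b, In b l -> valid_box b) -> Term Y l.
Proof.
  elim: l => [|b l IH] Hv.
  - move=> K Xl DX Xc. exists K, Xl, DX, Xc. apply cpred_done.
  - have [m B] := bnd_exists Heps b.
    eapply term_cons; [apply Hv; by left | exact B | reflexivity |].
    apply IH => c Hc; apply Hv; by right.
Qed.
End Term.







Definition asb (P : Prop) : bool := if excluded_middle_informative P then true else false.
Lemma asbT (P : Prop) : P -> asb P = true.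
Proof. rewrite /asb. by case: excluded_middle_informative. Qed.
Lemma asbF (P : Prop) : ~ P -> asb P = false.
Proof. rewrite /asb. by case: excluded_middle_informative. Qed.

Section Cnt.
Context {T : Type}.
Definition cnt (Q : T -> Prop) (D : list T) : nat := count (fun d => asb (Q d)) D.

Lemma cnt_mono (Q Q' : T -> Prop) D : (forall d, In d D -> Q d -> Q' d) ->
  (cnt Q D <= cnt Q' D)%coq_nat.
Proof.
  rewrite /cnt. elim: D => [|a D IH] H /=; first lia.
  have IH' := IH (fun d Hd => H d (or_intror Hd)).
  destruct (classic (Q a)) as [Ha|Ha].
  - have HQ' : Q' a by apply H; [left|].
      rewrite (asbT Ha) (asbT HQ') /=. lia.
  - rewrite (asbF Ha). case: (asb (Q' a)) => /=; lia.
Qed.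

Lemma cnt_strict (Q Q' : T -> Prop) D : (forall d, In d D -> Q d -> Q' d) ->
  (exists d, In d D /\ Q' d /\ ~ Q d) -> (cnt Q D < cnt Q' D)%coq_nat.
Proof.
  rewrite /cnt. elim: D => [|a D IH] H [d [Hd [H1 H2]]] /=; first by case: Hd.
  have M := cnt_mono (fun d Hd => H d (or_intror Hd)). rewrite /cnt in M.
  case: Hd => [E|Hd].
  - subst a. rewrite (asbF H2) (asbT H1) /=. lia.
  - have IH' := IH (fun d Hd => H d (or_intror Hd)) (ex_intro _ d (conj Hd (conj H1 H2))).
    destruct (classic (Q a)) as [Ha|Ha].
    + have HQ' : Q' a by apply H; [left|].
      rewrite (asbT Ha) (asbT HQ') /=. lia.
    + rewrite (asbF Ha). case: (asb (Q' a)) => /=; lia.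
Qed.
End Cnt.

Section Gen.
Context {n : nat} (eps : R) (sel : box n -> nat).
Hypothesis Hsel : sel_ok sel.
Hypothesis Heps : 0 < eps.

Fixpoint gen (k : nat) (b : box n) : list (box n) :=
  b :: match k with
       | O => nil
       | S k' => if Rlt_dec (wid b) eps then nil
                 else gen k' (fst (bisect sel b)) ++ gen k' (snd (bisect sel b))
       end.

Lemma gen_closed : forall k (b : box n) m, valid_box b -> Bnd eps b m ->
  (\sum_(i < n) m i <= k)%N -> forall b', In b' (gen k b) -> ~ wid b' < eps ->
  In (fst (bisect sel b')) (gen k b) /\ In (snd (bisect sel b')) (gen k b).
Proof.
  elim=> [|k IH] b m V B Hk b' Hb' Hw.
  - case: Hb' => [E|[]]. subst b'.
    have [m' [_ [_ Hlt]]] := split_measure Hsel Heps V B Hw.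
    exfalso. move: Hk Hlt. rewrite leqn0 => /eqP ->. by [].
  - simpl in Hb' |- *.
    case: Hb' => [E|Hb'].
    + subst b'. destruct (Rlt_dec (wid b) eps) as [Hlt|Hnlt]; first by [].
      split; right; apply in_or_app; [left|right]; destruct k; simpl; left; reflexivity.
    + destruct (Rlt_dec (wid b) eps) as [Hlt|Hwb]; first by case: Hb'.
      have [m' [B1 [B2 Hlt]]] := split_measure Hsel Heps V B Hwb.
      have Hk' : (\sum_(i < n) m' i <= k)%N by rewrite -ltnS; exact: leq_trans Hlt Hk.
      case: (in_app_or _ _ _ Hb') => Hb''.
      * have [h1 h2] := IH _ _ (bisect_valid1 sel V) B1 Hk' b' Hb'' Hw.
        split; right; apply in_or_app; by left.
      * have [h1 h2] := IH _ _ (bisect_valid2 sel V) B2 Hk' b' Hb'' Hw.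
        split; right; apply in_or_app; by right.
Qed.

Lemma unif_bound (L : list (box n)) : exists k, forall b, In b L ->
  exists m, Bnd eps b m /\ (\sum_(i < n) m i <= k)%N.
Proof.
  elim: L => [|b L [k IH]]; first by exists 0%N.
  have [m B] := bnd_exists Heps b.
  exists (maxn k (\sum_(i < n) m i)) => c [<-|Hc].
  - exists m; split => //. by rewrite leq_maxr.
  - have [m' [B' H']] := IH c Hc. exists m'; split => //.
    exact: leq_trans H' (leq_maxl _ _).
Qed.

Definition Dclosed (D : list (box n)) :=
  forall b, In b D -> ~ wid b < eps -> In (fst (bisect sel b)) D /\ In (snd (bisect sel b)) D.

Lemma D_exists (L : list (box n)) : (forall b, In b L -> valid_box b) ->
  exists D, Dclosed D /\ forall b, In b L -> In b D.
Proof.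
  move=> HV. have [k Hk] := unif_bound L.
  exists (flat_map (gen k) L). split.
  - move=> b' /in_flat_map [b [Hb Hb']] Hw.
    have [m [B Hm]] := Hk b Hb.
    have [h1 h2] := gen_closed (HV b Hb) B Hm Hb' Hw.
    split; apply/in_flat_map; by exists b.
  - move=> b Hb. apply/in_flat_map. exists b; split => //. by case: k {Hk}; left.
Qed.
End Gen.








Lemma boxes_set_app n (A B : list (box n)) x :
  boxes_set (A ++ B) x <-> boxes_set A x \/ boxes_set B x.
Proof.
  split.
  - move=> [b [Hb Hx]]. case: (in_app_or _ _ _ Hb) => H; [left|right]; by exists b.
  - move=> [[b [Hb Hx]]|[b [Hb Hx]]]; exists b; split => //; apply in_or_app; auto.
Qed.

Lemma bsa1 n (A B : list (box n)) x : boxes_set (A ++ B) x -> boxes_set A x \/ boxes_set B x.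
Proof. by move/boxes_set_app. Qed.
Lemma bsaL n (A B : list (box n)) x : boxes_set A x -> boxes_set (A ++ B) x.
Proof. move=> H; apply/boxes_set_app; by left. Qed.
Lemma bsaR n (A B : list (box n)) x : boxes_set B x -> boxes_set (A ++ B) x.
Proof. move=> H; apply/boxes_set_app; by right. Qed.

Section Inner.
Context {n : nat} {U : finType} (F : U -> box n -> box n) (eps : R) (sel : box n -> nat).
Variable R : pset n.

Definition PR (b : box n) := valid_box b /\ box_sub b R.

Lemma PR_closed (S : pset n) b : (PR b /\ box_sub b S) ->
  (PR (fst (bisect sel b)) /\ box_sub (fst (bisect sel b)) S) /\
  (PR (snd (bisect sel b)) /\ box_sub (snd (bisect sel b)) S).
Proof.
  move=> [[V H1] H2]. split; split; try split.
  - exact: bisect_valid1.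
  - move=> x Hx; apply H1; exact: bisect_sub1 Hx.
  - move=> x Hx; apply H2; exact: bisect_sub1 Hx.
  - exact: bisect_valid2.
  - move=> x Hx; apply H1; exact: bisect_sub2 Hx.
  - move=> x Hx; apply H2; exact: bisect_sub2 Hx.
Qed.

Lemma inner_spec Z X Xt V G2 Kv Xf Kvf G2f :
  inner F eps sel Z X Xt V G2 Kv Xf Kvf G2f -> Xt = Z ++ V ->
  (forall b, In b V -> PR b) -> (forall b, In b G2 -> PR b) ->
  (forall b u, In (b,u) Kv -> PR b /\ box_sub (F u b) (boxes_set X)) ->
  (forall x, boxes_set V x -> boxes_set X x -> interval_part Kv x) ->
  (forall b u, In (b,u) Kvf -> PR b /\
      box_sub (F u b) (fun x => boxes_set Z x \/ interval_part Kvf x)) /\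
  (forall x, boxes_set Xf x -> boxes_set Z x \/ interval_part Kvf x) /\
  (forall x, boxes_set Z x -> boxes_set Xf x) /\
  (forall x, boxes_set Xf x -> boxes_set Xt x) /\
  (forall b, In b G2f -> PR b) /\
  (forall x, boxes_set V x -> boxes_set Xf x \/ boxes_set G2f x) /\
  (forall b, In b G2 -> In b G2f).
Proof.
  move=> H. elim: H => {X Xt V G2 Kv Xf Kvf G2f}.
  - move=> X Xt V G2 Kv Heq E HV HG HK HVK; subst Xt.
    split; [|split; [|split; [|split; [|split; [|split]]]]].
    + move=> b u Hb. have [P1 P2] := HK b u Hb. split => // x Hx.
      case: (bsa1 ((Heq x).2 (P2 x Hx))) => [Hz|Hv]; first by left.
      right. apply HVK => //. exact: P2.
    + move=> x Hx. case: (bsa1 ((Heq x).2 Hx)) => [Hz|Hv]; first by left.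
      right. by apply HVK.
    + move=> x Hx. apply (Heq x).1. exact: bsaL.
    + move=> x Hx. exact: (Heq x).2.
    + done.
    + move=> x Hx. left. apply (Heq x).1. exact: bsaR.
    + done.
  - move=> X Xt V G2 Kv Kv' Vl DV Vc Xf Kvf G2f Hne Hc _ IH E HV HG HK HVK; subst Xt.
    rewrite /CPred in Hc.
    have S := @cpred_spec n U F eps sel (fun b => PR b /\ box_sub b (boxes_set V)) _ _ _ _ _ _ _ _ _ _ Hc.
    have {}S := S (fun b Pb _ => PR_closed Pb).
    have {}S := S (fun b Hb => conj (HV b Hb) (fun x Hx => ex_intro _ b (conj Hb Hx))).
    move: S => [s1 [s2 [s3 [s4 [s5 [s6 [s7 [s8 s9]]]]]]]].
    have h1 : forall b, In b Vl -> PR b.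
    { move=> b Hb. case: (s3 b Hb) => [[]|[[]]] //. }
    have h2 : forall b, In b (G2 ++ DV ++ Vc) -> PR b.
    { move=> b Hb0. case: (in_app_or _ _ _ Hb0) => [Hb|Hb1]; first by apply HG.
      case: (in_app_or _ _ _ Hb1) => Hb.
      - by case: (s4 b Hb) => [[]|[[]]].
      - by case: (s5 b Hb) => [[]|[[]]]. }
    have h3 : forall b u, In (b,u) Kv' -> PR b /\ box_sub (F u b) (boxes_set (Z ++ V)).
    { move=> b u Hb. case: (s2 b u Hb) => [[]|[[]]]. by auto. }
    have h4 : forall x, boxes_set Vl x -> boxes_set (Z ++ V) x -> interval_part Kv' x.
    { move=> x [b [Hb Hx]] _. case: (s3 b Hb) => [[]|[_ [u Hu]]].
      by exists b, u. }
    have := IH erefl h1 h2 h3 h4.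
    move=> [i1 [i2 [i3 [i4 [i5 [i6 i7]]]]]].
    split; [done|split; [done|split; [done|split; [|split; [done|split]]]]].
    + move=> x /i4 /bsa1 [Hz|[b [Hb Hx]]]; first exact: bsaL.
      apply bsaR. case: (s3 b Hb) => [[]|[[_ Hs] _]]. exact: Hs.
    + move=> x Hx. case: (s9 x Hx) => [Hl|[[b [Hb Hx']]|[b [Hb Hx']]]].
      * exact: i6.
      * right. exists b; split => //. apply i7. apply in_or_app; right; apply in_or_app; by left.
      * right. exists b; split => //. apply i7. apply in_or_app; right; apply in_or_app; by right.
    + move=> b Hb. apply i7. apply in_or_app; by left.
Qed.
End Inner.












Section Esc.
Context {n : nat} {U : finType} (f : U -> pt n -> pt n) (Xs Om : pset n) (delta : R).

Fixpoint Esc (T : pset n) (k : nat) (x : pt n) : Prop :=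
  forall v, exists d : pt n, (forall i, Rabs (d i) <= delta) /\
    ~ T (fun i => f v x i + d i) /\
    (Xs (fun i => f v x i + d i) -> Om (fun i => f v x i + d i) ->
     match k with O => False | S k' => Esc T k' (fun i => f v x i + d i) end).

Lemma Esc_S T k x : Esc T k x -> Esc T (S k) x.
Proof.
  elim: k x => [|k IH] x /= H v; have [d [h1 [h2 h3]]] := H v; exists d; split => //; split => //.
  - move=> a b; by case: (h3 a b).
  - move=> a b; apply IH; exact: h3.
Qed.

Lemma Esc_le T k k' x : (k <= k')%coq_nat -> Esc T k x -> Esc T k' x.
Proof. elim=> [//|k'' _ IH] H; apply Esc_S; auto. Qed.
End Esc.

Section Bad.
Context {n : nat} {U : finType} (f : U -> pt n -> pt n) (F : U -> box n -> box n)
  (Xs : pset n) (rho delta eps : R).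
Hypothesis HF : forall u, inclusion_function (f u) (F u).
Hypothesis Hrho : forall u b, valid_box b -> box_sub b Xs -> wid (F u b) <= rho * wid b.
Hypothesis Hrho0 : 0 < rho.
Hypothesis Hd0 : 0 <= delta.
Hypothesis Hre : rho * eps <= delta.

Definition badbox (Y : pset n) (b : box n) : Prop :=
  (wid b < eps /\ ~ (exists v, box_sub (F v b) Y)) \/ (forall v, disjoint_from (F v b) Y).

Lemma bad_step Y b x : valid_box b -> box_sub b Xs -> badbox Y b -> in_box b x ->
  forall v, exists d : pt n, (forall i, Rabs (d i) <= delta) /\ ~ Y (fun i => f v x i + d i).
Proof.
  move=> V S [[Hw Hns]|Hd] Hx v.
  - have [z [Hz Hnz]] : exists z, in_box (F v b) z /\ ~ Y z.
    { apply NNPP => C. apply Hns. exists v => z Hz. apply NNPP => Hy. apply C. by exists z. }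
    exists (fun i => z i - f v x i). split.
    + move=> i. have Hf := (HF v).1 b V x Hx i. have := Hz i.
      have := side_le_wid0 (F v b) i. have := Hrho v V S.
      have : rho * wid b <= rho * eps by apply Rmult_le_compat_l; lra.
      rewrite /side => h1 h2 h3 h4. apply Rabs_le. lra.
    + have -> : (fun i => f v x i + (z i - f v x i)) = z.
      { apply functional_extensionality => i. ring. }
      exact Hnz.
  - exists (fun _ => 0). split.
    + move=> i. rewrite Rabs_R0. lra.
    + have -> : (fun i => f v x i + 0) = f v x.
      { apply functional_extensionality => i. ring. }
      apply (Hd v). exact: (HF v).1.
Qed.
End Bad.

Section InnerC.
Context {n : nat} {U : finType} (f : U -> pt n -> pt n) (F : U -> box n -> box n)
  (Xs Om : pset n) (rho delta eps : R) (sel : box n -> nat).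
Hypothesis HF : forall u, inclusion_function (f u) (F u).
Hypothesis Hrho : forall u b, valid_box b -> box_sub b Xs -> wid (F u b) <= rho * wid b.
Hypothesis Hrho0 : 0 < rho.
Hypothesis Hd0 : 0 <= delta.
Hypothesis Hre : rho * eps <= delta.

Lemma inner_sub_Xt Z X Xt V G2 Kv Xf Kvf G2f :
  inner F eps sel Z X Xt V G2 Kv Xf Kvf G2f -> Xt = Z ++ V ->
  (forall b, In b V -> valid_box b) -> forall x, boxes_set Xf x -> boxes_set Xt x.
Proof.
  move=> H. elim: H => {X Xt V G2 Kv Xf Kvf G2f}.
  - move=> X Xt V G2 Kv Heq E HV x Hx. exact: (Heq x).2.
  - move=> X Xt V G2 Kv Kv' Vl DV Vc Xf Kvf G2f Hne Hc _ IH E HV; subst Xt.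
    rewrite /CPred in Hc.
    have S := @cpred_spec n U F eps sel (fun b => valid_box b /\ box_sub b (boxes_set V)) _ _ _ _ _ _ _ _ _ _ Hc.
    have {}S : CPspec F eps (fun b => valid_box b /\ box_sub b (boxes_set V)) (boxes_set (Z ++ V)) V [::] [::] [::] [::] Kv' Vl DV Vc.
    { apply S.
      - move=> b [Vb Sb] _. split; split.
        + exact: bisect_valid1.
        + move=> x Hx; apply Sb; exact: bisect_sub1 Hx.
        + exact: bisect_valid2.
        + move=> x Hx; apply Sb; exact: bisect_sub2 Hx.
      - move=> b Hb. split; first by apply HV. move=> x Hx; by exists b. }
    move: S => [s1 [s2 [s3 _]]].
    have h1 : forall b, In b Vl -> valid_box b.
    { move=> b Hb. by case: (s3 b Hb) => [[]|[[]]]. }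
    move=> x Hx. have := IH erefl h1 x Hx.
    move/bsa1 => [Hz|[b [Hb Hxb]]]; first exact: bsaL.
    apply bsaR. case: (s3 b Hb) => [[]|[[_ Sb] _]]. exact: Sb.
Qed.

Lemma inner_complete Z X Xt V G2 Kv Xf Kvf G2f :
  inner F eps sel Z X Xt V G2 Kv Xf Kvf G2f -> Xt = Z ++ V ->
  (forall b, In b V -> valid_box b /\ box_sub b Xs) ->
  forall c, (forall y, Xs y -> Om y -> ~ boxes_set Xt y -> ~ boxes_set Xf y ->
              exists k, (k < c)%coq_nat /\ Esc f Xs Om delta (boxes_set Xf) k y) ->
  forall y, Xs y -> Om y -> ~ boxes_set Xf y -> exists k, Esc f Xs Om delta (boxes_set Xf) k y.
Proof.
  move=> H. elim: H => {X Xt V G2 Kv Xf Kvf G2f}.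
  - move=> X Xt V G2 Kv Heq E HV c Hc y Xy Oy Ty.
    have [k [_ Hk]] := Hc y Xy Oy (fun h => Ty ((Heq y).1 h)) Ty. by exists k.
  - move=> X Xt V G2 Kv Kv' Vl DV Vc Xf Kvf G2f Hne Hc Hin IH E HV c Hprev; subst Xt.
    have Hsub : forall x, boxes_set Xf x -> boxes_set (Z ++ V) x.
    { have HV' : forall b, In b V -> valid_box b by move=> b Hb; case: (HV b Hb).
      move=> x Hx. exact: (inner_sub_Xt (inner_step Kv Hne Hc Hin) erefl HV' Hx). }
    rewrite /CPred in Hc.
    have S := @cpred_spec n U F eps sel (fun b => (valid_box b /\ box_sub b Xs) /\ box_sub b (boxes_set V)) _ _ _ _ _ _ _ _ _ _ Hc.
    have {}S : CPspec F eps (fun b => (valid_box b /\ box_sub b Xs) /\ box_sub b (boxes_set V)) (boxes_set (Z ++ V)) V [::] [::] [::] [::] Kv' Vl DV Vc.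
    { apply S.
      - move=> b [[Vb Xb] Sb] _. split; split; try split.
        + exact: bisect_valid1.
        + move=> x Hx; apply Xb; exact: bisect_sub1 Hx.
        + move=> x Hx; apply Sb; exact: bisect_sub1 Hx.
        + exact: bisect_valid2.
        + move=> x Hx; apply Xb; exact: bisect_sub2 Hx.
        + move=> x Hx; apply Sb; exact: bisect_sub2 Hx.
      - move=> b Hb. split; first by apply HV. move=> x Hx; by exists b. }
    move: S => [s1 [s2 [s3 [s4 [s5 [s6 [s7 [s8 s9]]]]]]]].
    apply (IH erefl) with (c := S c).
    { move=> b Hb. by case: (s3 b Hb) => [[]|[[]]]. }
    move=> y Xy Oy Ny Ty.
    destruct (classic (boxes_set (Z ++ V) y)) as [Hy|Hy]; last first.
    { have [k [Hk HE]] := Hprev y Xy Oy Hy Ty. exists k; split => //; lia. }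
    exists c; split; first lia.
    have Hnz : ~ boxes_set Z y by move=> h; apply Ny; apply bsaL.
    have HyV : boxes_set V y by case: (bsa1 Hy).
    have [b [[[Vb Xb] _] [Bb Hyb]]] : exists b, ((valid_box b /\ box_sub b Xs) /\ box_sub b (boxes_set V)) /\
        (badbox F eps (boxes_set (Z ++ V)) b /\ in_box b y).
    { case: (s9 y HyV) => [Hl|[[b [Hb Hyb]]|[b [Hb Hyb]]]].
      - exfalso; apply Ny; exact: bsaR.
      - case: (s4 b Hb) => [[]|[Pb [Hw Hns]]]. exists b; split => //. split => //. by left.
      - case: (s5 b Hb) => [[]|[Pb Hd]]. exists b; split => //. split => //. by right. }
    have key : forall v, exists d : pt n, (forall i, Rabs (d i) <= delta) /\
       ~ boxes_set Xf (fun i => f v y i + d i) /\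
       (Xs (fun i => f v y i + d i) -> Om (fun i => f v y i + d i) ->
        exists k, (k < c)%coq_nat /\ Esc f Xs Om delta (boxes_set Xf) k (fun i => f v y i + d i)).
    { move=> v.
      have [d [Hd Hnd]] := bad_step HF Hrho Hrho0 Hd0 Hre Vb Xb Bb Hyb v.
      exists d; split => //.
      have HnT : ~ boxes_set Xf (fun i => f v y i + d i) by move=> h; apply Hnd; apply Hsub.
      split => // Xy' Oy'.
      exact: Hprev _ Xy' Oy' Hnd HnT. }
    case: c Hprev key => [|c'] _ key v /=; have [d [h1 [h2 h3]]] := key v; exists d; (split; [done|split; [done|]]);
      move=> Xy' Oy'; have [k [Hk HE]] := h3 Xy' Oy'; first lia.
    apply: (Esc_le (k := k)) => //. lia.
Qed.
End InnerC.



Section Escape.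
Context {n : nat} {U : finType} (f : U -> pt n -> pt n) (Xs Om : pset n) (delta : R).
Hypothesis Hd0 : 0 <= delta.

Lemma Esc_unfold T k x : Esc f Xs Om delta T k x -> forall v, exists d : pt n,
  (forall i, Rabs (d i) <= delta) /\ ~ T (fun i => f v x i + d i) /\
  (Xs (fun i => f v x i + d i) -> Om (fun i => f v x i + d i) ->
    exists k', k = S k' /\ Esc f Xs Om delta T k' (fun i => f v x i + d i)).
Proof.
  case: k => [|k] /= H v; have [d [h1 [h2 h3]]] := H v; exists d; split => //; split => //.
  - move=> a b; by case: (h3 a b).
  - move=> a b; exists k; split => //; exact: h3.
Qed.

Lemma escape (T : pset n) :
  (forall x, Xs x -> ~ Om x -> ~ T x -> forall v, exists d : pt n,
      (forall i, Rabs (d i) <= delta) /\ ~ T (fun i => f v x i + d i)) ->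
  (forall y, Xs y -> Om y -> ~ T y -> exists k, Esc f Xs Om delta T k y) ->
  forall x0, Win f Xs Om delta x0 -> T x0.
Proof.
  move=> HA HB x0 [X0 [kap [Htot Hwin]]].
  apply NNPP => T0.
  pose Inv (s : pt n * nat) := ~ T s.1 /\ (Xs s.1 -> Om s.1 -> Esc f Xs Om delta T s.2 s.1).
  pose StepP (s : pt n * nat) (p : (pt n * nat) * (U * pt n)) :=
    kap s.1 p.2.1 /\ (forall i, Rabs (p.2.2 i) <= delta) /\
    p.1.1 = (fun i => f p.2.1 s.1 i + p.2.2 i) /\
    (Inv s -> Xs s.1 -> Inv p.1 /\ (Om s.1 -> Xs p.1.1 -> Om p.1.1 -> S p.1.2 = s.2)).
  have step_ex : forall s, exists p, StepP s p.
  { move=> [x k]. have [u Hu] := Htot x.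
    destruct (classic (Inv (x, k) /\ Xs x)) as [[[HT HE] HX]|HN]; last first.
    { exists ((fun i => f u x i + 0, 0%N), (u, fun _ => 0)).
      split => //; split; first by move=> i /=; rewrite Rabs_R0.
      split => //. move=> a b; exfalso; apply HN; by split. }
    destruct (classic (Om x)) as [HO|HO].
    - have [d [h1 [h2 h3]]] := Esc_unfold (HE HX HO) u.
      exists ((fun i => f u x i + d i, k.-1), (u, d)).
      split => //; split => //; split => //.
      move=> _ _ /=. split.
      + split => //= a b. have [k' [Ek Hk]] := h3 a b. simpl in Ek. subst k. exact Hk.
      + move=> _ a b. have [k' [Ek Hk]] := h3 a b. simpl in Ek |- *. by subst k.
    - have [d [h1 h2]] := HA x HX HO HT u.
      destruct (classic (Xs (fun i => f u x i + d i) /\ Om (fun i => f u x i + d i))) as [[a b]|Hn].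
      + have [k' Hk'] := HB _ a b h2.
        exists ((fun i => f u x i + d i, k'), (u, d)).
        rewrite /StepP /Inv /=. split; [exact Hu|split; [exact h1|split; [reflexivity|]]].
        move=> _ _; split; [split; [exact h2|move=> _ _; exact Hk']|move=> ox; by exfalso].
      + exists ((fun i => f u x i + d i, 0%N), (u, d)).
        rewrite /StepP /Inv /=. split; [exact Hu|split; [exact h1|split; [reflexivity|]]].
        move=> _ _; split; [split; [exact h2|move=> a b; exfalso; apply Hn; by split]|move=> ox; by exfalso]. }
  pose nx s := proj1_sig (constructive_indefinite_description _ (step_ex s)).
  have nxP : forall s, StepP s (nx s) := fun s => proj2_sig (constructive_indefinite_description _ (step_ex s)).
  have [k0 Hk0] : exists k0, Inv (x0, k0).
  { destruct (classic (Om x0)) as [HO|HO].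
    - have [k Hk] := HB x0 X0 HO T0. exists k. by split.
    - exists 0%N. split; [exact T0| move=> _ a; by exfalso]. }
  pose traj := fix traj (t : nat) : pt n * nat := match t with O => (x0, k0) | S t => (nx (traj t)).1 end.
  have [HX [N HN]] := Hwin (fun t => (traj t).1) (fun t => (nx (traj t)).2.1) (fun t => (nx (traj t)).2.2) erefl
    (fun t => match nxP (traj t) with conj a (conj b (conj c _)) =>
       conj a (conj b (fun i => f_equal (fun g => g i) c)) end).
  have Hinv : forall t, Inv (traj t).
  { elim=> [//|t IH]. have [_ [_ [_ H]]] := nxP (traj t). exact: (H IH (HX t)).1. }
  have Hdec : forall t, (N <= t)%coq_nat -> S (traj (S t)).2 = (traj t).2.
  { move=> t Ht. have [_ [_ [_ H]]] := nxP (traj t). apply: (H (Hinv t) (HX t)).2.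
    - exact (HN t Ht).
    - exact (HX (S t)).
    - exact (HN (S t) ltac:(lia)). }
  have Hj : forall j, ((traj (N + j)%coq_nat).2 + j)%coq_nat = (traj N).2.
  { elim=> [|j IH]; first by rewrite !Nat.add_0_r.
    have := Hdec (N + j)%coq_nat ltac:(lia). have E : (N + j.+1)%coq_nat = S (N + j)%coq_nat by lia. rewrite E /=. lia. }
  have := Hj ((traj N).2).+1. lia.
Qed.
End Escape.


Lemma ip_app n (U : finType) (A B : list (box n * U)) x :
  interval_part (A ++ B) x <-> interval_part A x \/ interval_part B x.
Proof.
  split.
  - move=> [b [u [Hb Hx]]]. case: (in_app_or _ _ _ Hb) => H; [left|right]; by exists b, u.
  - move=> [[b [u [Hb Hx]]]|[b [u [Hb Hx]]]]; exists b, u; split => //; apply in_or_app; auto.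
Qed.

Section Strat.
Context {n : nat} {U : finType} (f : U -> pt n -> pt n) (F : U -> box n -> box n) (Xs Om : pset n).
Hypothesis HF : forall u, inclusion_function (f u) (F u).

Inductive Layered : list (box n * U) -> Prop :=
| lay_nil : Layered nil
| lay_z K Kz : Layered K ->
    (forall b u, In (b,u) Kz -> valid_box b /\ box_sub b Xs /\ box_sub (F u b) (interval_part K)) ->
    Layered (K ++ Kz)
| lay_v K Kv : Layered K ->
    (forall b u, In (b,u) Kv -> valid_box b /\ box_sub b (fun x => Xs x /\ Om x) /\
        box_sub (F u b) (fun x => interval_part K x \/ interval_part Kv x)) ->
    Layered (K ++ Kv).

Definition Conf (kap : pt n -> U -> Prop) (xs : nat -> pt n) (us : nat -> U) :=
  forall k, kap (xs k) (us k) /\ xs (S k) = f (us k) (xs k).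

Definition Strat (S : pset n) (kap : pt n -> U -> Prop) : Prop :=
  (forall x, S x -> Xs x) /\ (forall x, S x -> exists u, kap x u) /\
  (forall x u, S x -> kap x u -> S (f u x)) /\
  (forall xs us, S (xs 0%N) -> Conf kap xs us -> exists N, forall k, (N <= k)%coq_nat -> Om (xs k)).

Lemma traj_in (S : pset n) (kap kap' : pt n -> U -> Prop) xs us :
  (forall x u, S x -> kap' x u -> kap x u) ->
  (forall x u, S x -> kap x u -> S (f u x)) -> S (xs 0%N) -> Conf kap' xs us ->
  (forall k, S (xs k)) /\ Conf kap xs us.
Proof.
  move=> Hk Hc H0 Hconf.
  have A : forall k, S (xs k).
  { elim=> [//|k IH]. have [h1 h2] := Hconf k. rewrite h2. apply (Hc _ _ IH). exact (Hk _ _ IH h1). }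
  split => // k. have [h1 h2] := Hconf k. split => //. exact: Hk (A k) h1.
Qed.

Lemma conf_shift (kap : pt n -> U -> Prop) xs us t : Conf kap xs us ->
  Conf kap (fun k => xs (t + k)%coq_nat) (fun k => us (t + k)%coq_nat).
Proof. move=> H k. have [h1 h2] := H (t + k)%coq_nat. split => //. have -> : (t + S k)%coq_nat = S (t + k) by lia. exact h2. Qed.

Lemma layered_strat K : Layered K -> exists kap, Strat (interval_part K) kap.
Proof.
  elim => {K}.
  - exists (fun _ _ => True). split; [|split; [|split]].
    + by move=> x [b [u [[]]]].
    + by move=> x [b [u [[]]]].
    + by move=> x u [b [v [[]]]].
    + by move=> xs us [b [v [[]]]].
  - move=> K Kz _ [kap [s1 [s2 [s3 s4]]]] HKz.
    exists (fun x u => (interval_part K x /\ kap x u) \/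
                       (~ interval_part K x /\ exists b, In (b,u) Kz /\ in_box b x)).
    have Hr : forall x u, interval_part K x -> ((interval_part K x /\ kap x u) \/
                       (~ interval_part K x /\ exists b, In (b,u) Kz /\ in_box b x)) -> kap x u.
    { by move=> x u Hx [[]|[]]. }
    have HKc : forall x u, interval_part K x -> kap x u -> interval_part K (f u x) := s3.
    split; [|split; [|split]].
    + move=> x /ip_app [Hx|[b [u [Hb Hx]]]]; first by apply s1.
      have [_ [S _]] := HKz b u Hb. exact: S.
    + move=> x Hx. destruct (classic (interval_part K x)) as [H|H].
      * have [u Hu] := s2 x H. exists u; by left.
      * case/ip_app: Hx => [//|[b [u [Hb Hxb]]]]. exists u. right; split => //. by exists b.
    + move=> x u Hx [[HK Hk]|[HK [b [Hb Hxb]]]]; apply/ip_app; left.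
      { exact: s3. }
      have [Vb [_ Sb]] := HKz b u Hb. apply Sb. exact: (HF u).1.
    + move=> xs us H0 Hconf.
      destruct (classic (interval_part K (xs 0%N))) as [HK|HK].
      * have [_ C] := traj_in Hr HKc HK Hconf. exact: s4 HK C.
      * have [Hk E1] := Hconf 0%N.
        have HK1 : interval_part K (xs 1%N).
        { case: Hk => [[]//|[_ [b [Hb Hxb]]]]. rewrite E1.
          have [Vb [_ Sb]] := HKz b (us 0%N) Hb. apply Sb. exact: (HF _).1. }
        have Hc1 := conf_shift 1 Hconf.
        have [_ C] := traj_in Hr HKc HK1 Hc1.
        have [N HN] := s4 _ _ HK1 C.
        exists (1 + N)%coq_nat => k Hk'. have := HN (k - 1)%coq_nat ltac:(lia).
        by have -> : (1 + (k - 1))%coq_nat = k by lia.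
  - move=> K Kv _ [kap [s1 [s2 [s3 s4]]]] HKv.
    exists (fun x u => (interval_part K x /\ kap x u) \/
                       (~ interval_part K x /\ exists b, In (b,u) Kv /\ in_box b x)).
    have Hr : forall x u, interval_part K x -> ((interval_part K x /\ kap x u) \/
                       (~ interval_part K x /\ exists b, In (b,u) Kv /\ in_box b x)) -> kap x u.
    { by move=> x u Hx [[]|[]]. }
    have HKc : forall x u, interval_part K x -> kap x u -> interval_part K (f u x) := s3.
    have Hcl : forall x u, interval_part (K ++ Kv) x -> ((interval_part K x /\ kap x u) \/
                       (~ interval_part K x /\ exists b, In (b,u) Kv /\ in_box b x)) ->
                       interval_part (K ++ Kv) (f u x).
    { move=> x u Hx [[HK Hk]|[HK [b [Hb Hxb]]]]; apply/ip_app.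
      { left; exact: s3. }
      have [Vb [_ Sb]] := HKv b u Hb. apply Sb. exact: (HF u).1. }
    split; [|split; [|split]].
    + move=> x /ip_app [Hx|[b [u [Hb Hx]]]]; first by apply s1.
      have [_ [S _]] := HKv b u Hb. exact: (S x Hx).1.
    + move=> x Hx. destruct (classic (interval_part K x)) as [H|H].
      * have [u Hu] := s2 x H. exists u; by left.
      * case/ip_app: Hx => [//|[b [u [Hb Hxb]]]]. exists u. right; split => //. by exists b.
    + exact: Hcl.
    + move=> xs us H0 Hconf.
      have [Hall _] := traj_in (fun x u _ h => h) Hcl H0 Hconf.
      destruct (classic (exists t, interval_part K (xs t))) as [[t Ht]|Hn].
      * have Hct := conf_shift t Hconf.
        have Ht' : interval_part K (xs (t + 0)%coq_nat) by rewrite Nat.add_0_r.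
        have [_ C] := traj_in Hr HKc Ht' Hct.
        have [N HN] := s4 _ _ Ht' C.
        exists (t + N)%coq_nat => k Hk'. have := HN (k - t)%coq_nat ltac:(lia).
        by have -> : (t + (k - t))%coq_nat = k by lia.
      * exists 0%N => k _. case/ip_app: (Hall k) => [H|[b [u [Hb Hxb]]]].
        -- exfalso; apply Hn; by exists k.
        -- have [_ [S _]] := HKv b u Hb. exact: (S _ Hxb).2.
Qed.

Lemma strat_win (S : pset n) kap x : Strat S kap -> S x -> Win f Xs Om 0 x.
Proof.
  move=> [s1 [s2 [s3 s4]]] Hx. split; first exact: s1.
  have [u0 _] := s2 x Hx.
  exists (fun y u => S y -> kap y u). split.
  - move=> y. destruct (classic (S y)) as [H|H].
    + have [u Hu] := s2 y H. by exists u.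
    + exists u0 => h. by exfalso.
  - move=> xs us ds E Hs. subst x.
    have Hconf : Conf (fun y u => S y -> kap y u) xs us.
    { move=> k. have [h1 [h2 h3]] := Hs k. split => //.
      apply functional_extensionality => i. rewrite h3.
      have := h2 i. have := Rabs_pos (ds k i). move=> a b.
      have h := Rle_abs (ds k i). have h' := Rle_abs (- ds k i). rewrite Rabs_Ropp in h'.
      have -> : ds k i = 0 by lra. ring. }
    have [Hall C] := traj_in (kap := kap) (fun y u h1 h2 => h2 h1) s3 Hx Hconf.
    split; first by move=> k; apply s1.
    exact: s4 Hx C.
Qed.
End Strat.


Lemma badbox_ext n (U : finType) (F : U -> box n -> box n) eps (A B : pset n) b :
  seteq A B -> badbox F eps A b -> badbox F eps B b.
Proof.
  move=> E [[Hw Hn]|Hd]; [left; split => //|right].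
  - move=> [v Hv]. apply Hn. exists v => x Hx. apply (E x). exact: Hv.
  - move=> v x Hx HB. apply: (Hd v x Hx). exact: (E x).2.
Qed.

Section Outer.
Context {n : nat} {U : finType} (f : U -> pt n -> pt n) (F : U -> box n -> box n)
  (Xs Om : pset n) (rho delta eps : R) (sel : box n -> nat).
Hypothesis HF : forall u, inclusion_function (f u) (F u).
Hypothesis Hrho : forall u b, valid_box b -> box_sub b Xs -> wid (F u b) <= rho * wid b.
Hypothesis Hrho0 : 0 < rho.
Hypothesis Hd0 : 0 <= delta.

Lemma outer_main K Yt Y G1 G2 Kf :
  outer F eps sel K Yt Y G1 G2 Kf ->
  (forall b, In b G1 -> valid_box b /\ box_sub b Xs) ->
  (forall b, In b G2 -> PR (fun x => Xs x /\ Om x) b) ->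
  (forall x, Xs x -> ~ Om x -> boxes_set Yt x \/ boxes_set G1 x) ->
  (forall x, Xs x -> Om x -> boxes_set Yt x \/ boxes_set G2 x) ->
  Layered F Xs Om K -> (forall x, boxes_set Yt x -> interval_part K x) ->
  (seteq Y Xs \/ ((forall b, In b G1 -> badbox F eps Y b) /\
     (rho * eps <= delta -> forall y, Xs y -> Om y -> ~ boxes_set Yt y ->
        exists k, Esc f Xs Om delta (boxes_set Yt) k y))) ->
  Layered F Xs Om Kf /\ (rho * eps <= delta -> pset_sub (Win f Xs Om delta) (interval_part Kf)).
Proof.
  move=> H. elim: H => {K Yt Y G1 G2 Kf}.
  - move=> K Yt Y G1 G2 Heq HG1 HG2 Hc1 Hc2 HL HYK Hbad. split => // Hre x0 Hx0.
    apply HYK. case: Hbad => [HX|[HB HE]].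
    + apply (Heq x0).2. apply (HX x0).2. exact: Hx0.1.
    + apply: (escape Hd0 _ (HE Hre) Hx0).
      move=> x Xx Ox Tx. case: (Hc1 x Xx Ox) => [//|[b [Hb Hxb]]].
      have [Vb Sb] := HG1 b Hb.
      have Bb := badbox_ext (fun z => iff_sym (Heq z)) (HB b Hb).
      move=> v; exact (bad_step HF Hrho Hrho0 Hd0 Hre Vb Sb Bb Hxb v).
  - move=> K Yt Y G1 G2 Kz Zl DZ Zc Xf Kv G2' Kf Hne Hc Hin _ IH HG1 HG2 Hc1 Hc2 HL HYK Hbad.
    rewrite /CPred in Hc.
    have S := @cpred_spec n U F eps sel (fun b => valid_box b /\ box_sub b Xs) _ _ _ _ _ _ _ _ _ _ Hc.
    have {}S : CPspec F eps (fun b => valid_box b /\ box_sub b Xs) (boxes_set Yt) G1 [::] [::] [::] [::] Kz Zl DZ Zc.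
    { apply S => //.
      move=> b [Vb Sb] _. split; split.
      + exact: bisect_valid1.
      + move=> x Hx; apply Sb; exact: bisect_sub1 Hx.
      + exact: bisect_valid2.
      + move=> x Hx; apply Sb; exact: bisect_sub2 Hx. }
    move: S => [c1 [c2 [c3 [c4 [c5 [c6 [c7 [c8 c9]]]]]]]].
    have [i1 [i2 [i3 [i4 [i5 [i6 i7]]]]]] := @inner_spec n U F eps sel (fun x => Xs x /\ Om x) _ _ _ _ _ _ _ _ _ Hin erefl HG2
      (fun b Hb => match Hb with end) (fun b u Hb => match Hb with end)
      (fun x _ Hx => match Hx with ex_intro _ (conj Hb _) => match Hb with end end).
    have HYZ : forall x, boxes_set Yt x -> boxes_set Xf x by move=> x Hx; apply i3; apply bsaL.
    have HZK : forall x, boxes_set (Yt ++ Zl) x -> interval_part (K ++ Kz) x.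
    { move=> x /bsa1 [Hy|[b [Hb Hxb]]]; apply/ip_app; first by left; apply HYK.
      right. case: (c3 b Hb) => [[]|[_ [u Hu]]]. by exists b, u. }
    apply IH.
    + move=> b Hb. case: (in_app_or _ _ _ Hb) => Hb'.
      * by case: (c4 b Hb') => [[]|[]].
      * by case: (c5 b Hb') => [[]|[]].
    + exact: i5.
    + move=> x Xx Ox. case: (Hc1 x Xx Ox) => [Hy|Hg]; first by left; apply HYZ.
      case: (c9 x Hg) => [Hz|[[b [Hb Hxb]]|[b [Hb Hxb]]]].
      * left. apply i3. exact: bsaR.
      * right. exists b; split => //. apply in_or_app; by left.
      * right. exists b; split => //. apply in_or_app; by right.
    + move=> x Xx Ox. case: (Hc2 x Xx Ox) => [Hy|Hg]; first by left; apply HYZ.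
      exact: i6.
    + apply lay_v; first apply lay_z => //.
      * move=> b u Hb. case: (c2 b u Hb) => [[]|[[Vb Sb] Hf]]. split => //; split => //.
        move=> x Hx. apply HYK. exact: Hf.
      * move=> b u Hb. have [[Vb Sb] Hf] := i1 b u Hb. split => //; split => //.
        move=> x Hx. case: (Hf x Hx) => [Hz|Hk]; [left; exact: HZK|by right].
    + move=> x Hx. apply/ip_app. case: (i2 x Hx) => [Hz|Hk]; [left; exact: HZK|by right].
    + right. split.
      * move=> b Hb. case: (in_app_or _ _ _ Hb) => Hb'.
        -- case: (c4 b Hb') => [[]|[_ [Hw Hns]]]. by left.
        -- case: (c5 b Hb') => [[]|[_ Hd]]. by right.
      * move=> Hre.
        apply: (@inner_complete _ _ _ _ _ _ _ _ _ _ HF Hrho Hrho0 Hd0 Hre _ _ _ _ _ _ _ _ _ Hin erefl _ 0%N).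
        -- move=> b Hb. have [Vb Sb] := HG2 b Hb. split => // x Hx. exact: (Sb x Hx).1.
        -- move=> y Xy Oy Hn _. exfalso. apply Hn.
           case: (Hc2 y Xy Oy) => [Hy|Hy]; [apply bsaL; exact: bsaL|exact: bsaR].
Qed.
End Outer.


Section Exist.
Context {n : nat} {U : finType} (F : U -> box n -> box n) (eps : R) (sel : box n -> nat).
Hypothesis Hsel : sel_ok sel.
Hypothesis Heps : 0 < eps.
Variable D : list (box n).
Hypothesis HD : Dclosed eps sel D.

Definition PD (S : pset n) (b : box n) := (valid_box b /\ In b D) /\ box_sub b S.

Lemma PD_closed S b : PD S b -> ~ wid b < eps ->
  PD S (fst (bisect sel b)) /\ PD S (snd (bisect sel b)).
Proof.
  move=> [[Vb Db] Sb] Hw. have [D1 D2] := HD Db Hw. split; split; try split => //.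
  - exact: bisect_valid1.
  - move=> x Hx; apply Sb; exact: bisect_sub1 Hx.
  - exact: bisect_valid2.
  - move=> x Hx; apply Sb; exact: bisect_sub2 Hx.
Qed.

Lemma cpred_ex_spec (Y : pset n) (l : list (box n)) :
  (forall b, In b l -> valid_box b /\ In b D) ->
  exists K' Xl' DX' Xc', cpred F eps sel Y l [::] [::] [::] [::] K' Xl' DX' Xc' /\
    CPspec F eps (PD (boxes_set l)) Y l [::] [::] [::] [::] K' Xl' DX' Xc'.
Proof.
  move=> Hl. have [K' [Xl' [DX' [Xc' H]]]] := cpred_exists F Hsel Heps Y (fun b Hb => (Hl b Hb).1) [::] [::] [::] [::].
  exists K', Xl', DX', Xc'. split => //. apply: (cpred_spec H).
  - move=> b Pb Hw. exact: PD_closed.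
  - move=> b Hb. split; first exact: Hl. move=> x Hx; by exists b.
Qed.

Lemma inner_D Z X Xt V G2 Kv Xf Kvf G2f :
  inner F eps sel Z X Xt V G2 Kv Xf Kvf G2f -> Xt = Z ++ V ->
  (forall b, In b V -> valid_box b /\ In b D) -> (forall b, In b G2 -> valid_box b /\ In b D) ->
  (forall b, In b X -> In b Z \/ In b D) ->
  (forall b, In b Xf -> In b Z \/ In b D) /\ (forall b, In b G2f -> valid_box b /\ In b D).
Proof.
  move=> H. elim: H => {X Xt V G2 Kv Xf Kvf G2f}.
  - move=> X Xt V G2 Kv _ _ _ HG HX. by split.
  - move=> X Xt V G2 Kv Kv' Vl DV Vc Xf Kvf G2f Hne Hc _ IH E HV HG HX; subst Xt.
    rewrite /CPred in Hc.
    have S := @cpred_spec n U F eps sel (PD (boxes_set V)) _ _ _ _ _ _ _ _ _ _ Hc.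
    have {}S : CPspec F eps (PD (boxes_set V)) (boxes_set (Z ++ V)) V [::] [::] [::] [::] Kv' Vl DV Vc.
    { apply S.
      - move=> b Pb Hw. exact: PD_closed.
      - move=> b Hb. split; first exact: HV. move=> x Hx; by exists b. }
    move: S => [s1 [s2 [s3 [s4 [s5 _]]]]].
    apply IH => //.
    + move=> b Hb. by case: (s3 b Hb) => [[]|[[]]].
    + move=> b Hb. case: (in_app_or _ _ _ Hb) => [Hb'|Hb']; first exact: HG.
      case: (in_app_or _ _ _ Hb') => Hb''.
      * by case: (s4 b Hb'') => [[]|[[]]].
      * by case: (s5 b Hb'') => [[]|[[]]].
    + move=> b Hb. case: (in_app_or _ _ _ Hb) => Hb'; first by left.
      right. exact: (HV b Hb').2.
Qed.

Lemma not_seteq_sub (A B : pset n) : ~ seteq A B -> (forall x, A x -> B x) -> exists x, B x /\ ~ A x.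
Proof.
  move=> Hn Hs. apply NNPP => C. apply Hn => x. split; first exact: Hs.
  move=> Bx. apply NNPP => Ax. apply C. by exists x.
Qed.

Lemma inner_ex_A Z : forall s X Xt V G2 Kv Vp, Xt = Z ++ V -> X = Z ++ Vp ->
  (forall b, In b V -> valid_box b /\ In b D) -> (forall b, In b Vp -> In b D) ->
  (forall x, boxes_set Xt x -> boxes_set X x) ->
  (cnt (fun d => box_sub d (boxes_set X)) D <= s)%coq_nat ->
  exists Xf Kvf G2f, inner F eps sel Z X Xt V G2 Kv Xf Kvf G2f.
Proof.
  elim=> [|s IH] X Xt V G2 Kv Vp E1 E2 HV HVp Hsub Hs;
  (destruct (classic (seteq (boxes_set Xt) (boxes_set X))) as [Heq|Hne];
    [exists X, Kv, G2; exact: inner_stop|]);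
  have [x [Xx Ntx]] := not_seteq_sub Hne Hsub;
  (have [b [Hb Hxb]] : exists b, In b Vp /\ in_box b x by
    (rewrite E2 in Xx; case: (bsa1 Xx) => [Hz|//]; exfalso; apply Ntx; rewrite E1; exact: bsaL));
  have Hlt : (cnt (fun d => box_sub d (boxes_set Xt)) D < cnt (fun d => box_sub d (boxes_set X)) D)%coq_nat
    by (apply cnt_strict; [move=> d _ Hd y Hy; apply Hsub; exact: Hd|
        exists b; split; [exact: HVp|split; [move=> y Hy; rewrite E2; apply bsaR; by exists b|
        move=> Hbs; apply Ntx; exact: Hbs]]]).
  - lia.
  - have [Kv' [Vl [DV [Vc [Hc S]]]]] := cpred_ex_spec (boxes_set Xt) HV.
    move: S => [s1 [s2 [s3 [s4 [s5 _]]]]].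
    have [Xf [Kvf [G2f Hin]]] : exists Xf Kvf G2f,
        inner F eps sel Z Xt (Z ++ Vl) Vl (G2 ++ DV ++ Vc) Kv' Xf Kvf G2f.
    { apply: (IH Xt (Z ++ Vl) Vl _ _ V erefl E1).
      - move=> c Hc'. by case: (s3 c Hc') => [[]|[[]]].
      - move=> c Hc'. exact: (HV c Hc').2.
      - rewrite E1. move=> y /bsa1 [Hz|[c [Hc' Hyc]]]; first exact: bsaL.
        apply bsaR. case: (s3 c Hc') => [[]|[[_ Sc] _]]. exact: Sc.
      - lia. }
    exists Xf, Kvf, G2f. apply: inner_step Hne _ Hin. exact: Hc.
Qed.

Lemma inner_ex Z V : (forall b, In b V -> valid_box b /\ In b D) ->
  exists Xf Kvf G2f, inner F eps sel Z [::] (Z ++ V) V [::] [::] Xf Kvf G2f.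
Proof.
  move=> HV.
  destruct (classic (seteq (boxes_set (Z ++ V)) (boxes_set [::]))) as [Heq|Hne].
  { exists [::], [::], [::]. exact: inner_stop. }
  have [Kv' [Vl [DV [Vc [Hc S]]]]] := cpred_ex_spec (boxes_set (Z ++ V)) HV.
  move: S => [s1 [s2 [s3 [s4 [s5 _]]]]].
  have [Xf [Kvf [G2f Hin]]] : exists Xf Kvf G2f,
      inner F eps sel Z (Z ++ V) (Z ++ Vl) Vl ([::] ++ DV ++ Vc) Kv' Xf Kvf G2f.
  { eapply inner_ex_A with (s := cnt (fun d => box_sub d (boxes_set (Z ++ V))) D) (Vp := V);
      [reflexivity|reflexivity| | | |lia].
    - move=> c Hc'. by case: (s3 c Hc') => [[]|[[]]].
    - move=> c Hc'. exact: (HV c Hc').2.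
    - move=> y /bsa1 [Hz|[c [Hc' Hyc]]]; first exact: bsaL.
      apply bsaR. case: (s3 c Hc') => [[]|[[_ Sc] _]]. exact: Sc. }
  exists Xf, Kvf, G2f. apply: inner_step Hne _ Hin. exact: Hc.
Qed.

Lemma step_ex (K : list (box n * U)) Yt G1 G2 :
  (forall b, In b G1 -> valid_box b /\ In b D) -> (forall b, In b G2 -> valid_box b /\ In b D) ->
  (forall b, In b Yt -> In b D) ->
  exists Kz Zl DZ Zc Xf Kv G2', CPred F eps sel G1 Yt Kz Zl DZ Zc /\
    inner F eps sel (Yt ++ Zl) [::] ((Yt ++ Zl) ++ G2) G2 [::] [::] Xf Kv G2' /\
    (forall b, In b (DZ ++ Zc) -> valid_box b /\ In b D) /\
    (forall b, In b G2' -> valid_box b /\ In b D) /\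
    (forall b, In b Xf -> In b D) /\ (forall x, boxes_set Yt x -> boxes_set Xf x).
Proof.
  move=> HG1 HG2 HYt.
  have [Kz [Zl [DZ [Zc [Hc S]]]]] := cpred_ex_spec (boxes_set Yt) HG1.
  move: S => [s1 [s2 [s3 [s4 [s5 _]]]]].
  have [Xf [Kv [G2' Hin]]] := inner_ex (Yt ++ Zl) HG2.
  have [d1 d2] := inner_D Hin erefl HG2 (fun b (Hb : In b [::]) => match Hb with end)
    (fun b (Hb : In b [::]) => match Hb with end).
  have [_ [_ [i3 _]]] := @inner_spec n U F eps sel (fun _ => True) _ _ _ _ _ _ _ _ _ Hin erefl
    (fun b Hb => conj (HG2 b Hb).1 (fun _ _ => I))
    (fun b Hb => match Hb with end) (fun b u Hb => match Hb with end)
    (fun x _ Hx => match Hx with ex_intro _ (conj Hb _) => match Hb with end end).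
  exists Kz, Zl, DZ, Zc, Xf, Kv, G2'. split => //. split => //. split; [|split; [done|split]].
  - move=> b Hb. case: (in_app_or _ _ _ Hb) => Hb'.
    + by case: (s4 b Hb') => [[]|[[]]].
    + by case: (s5 b Hb') => [[]|[[]]].
  - move=> b Hb. case: (d1 b Hb) => [Hz|//]. case: (in_app_or _ _ _ Hz) => Hz'; first exact: HYt.
    by case: (s3 b Hz') => [[]|[[[]]]].
  - move=> x Hx. apply i3. exact: bsaL.
Qed.

Lemma outer_ex_B : forall s K Yt Yp G1 G2,
  (forall b, In b G1 -> valid_box b /\ In b D) -> (forall b, In b G2 -> valid_box b /\ In b D) ->
  (forall b, In b Yt -> In b D) -> (forall x, boxes_set Yp x -> boxes_set Yt x) ->
  (cnt (fun d => ~ box_sub d (boxes_set Yp)) D <= s)%coq_nat ->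
  exists Kf, outer F eps sel K Yt (boxes_set Yp) G1 G2 Kf.
Proof.
  elim=> [|s IH] K Yt Yp G1 G2 HG1 HG2 HYt Hsub Hs;
  (destruct (classic (seteq (boxes_set Yt) (boxes_set Yp))) as [Heq|Hne];
    [exists K; exact: outer_stop|]);
  have [x [Xx Ntx]] := not_seteq_sub (fun z => Hne (fun y => iff_sym (z y))) Hsub;
  case: Xx => [b [Hb Hxb]];
  have Hlt : (cnt (fun d => ~ box_sub d (boxes_set Yt)) D < cnt (fun d => ~ box_sub d (boxes_set Yp)) D)%coq_nat
    by (apply cnt_strict; [move=> d _ Hd Hd'; apply Hd => y Hy; apply Hsub; exact: Hd'|
        exists b; split; [exact: HYt|split; [move=> Hbs; apply Ntx; exact: Hbs|
        move=> Hn; apply Hn => y Hy; by exists b]]]).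
  - lia.
  - have [Kz [Zl [DZ [Zc [Xf [Kv [G2' [Hc [Hin [h1 [h2 [h3 h4]]]]]]]]]]]] := step_ex K HG1 HG2 HYt.
    have [Kf HK] := IH ((K ++ Kz) ++ Kv) Xf Yt (DZ ++ Zc) G2' h1 h2 h3 h4 ltac:(lia).
    exists Kf. apply: outer_step Hne Hc Hin HK.
Qed.

Lemma outer_ex (Xs : pset n) G1 G2 :
  (forall b, In b G1 -> valid_box b /\ In b D) -> (forall b, In b G2 -> valid_box b /\ In b D) ->
  exists Kf, outer F eps sel [::] [::] Xs G1 G2 Kf.
Proof.
  move=> HG1 HG2.
  destruct (classic (seteq (boxes_set [::]) Xs)) as [Heq|Hne].
  { exists [::]. exact: outer_stop. }
  have [Kz [Zl [DZ [Zc [Xf [Kv [G2' [Hc [Hin [h1 [h2 [h3 h4]]]]]]]]]]]] :=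
    step_ex [::] HG1 HG2 (fun b (Hb : In b [::]) => match Hb with end).
  have [Kf HK] := @outer_ex_B _ (([::] ++ Kz) ++ Kv) Xf [::] (DZ ++ Zc) G2' h1 h2 h3
    (fun x (Hx : boxes_set [::] x) => match Hx with ex_intro _ (conj Hb _) => match Hb with end end) (le_n _).
  exists Kf. apply: outer_step Hne Hc Hin HK.
Qed.
End Exist.

Theorem theorem1 (n : nat) (U : finType) (f : U -> pt n -> pt n)
    (X Om : pset n) (G1 G2 : list (box n)) (F : U -> box n -> box n)
    (rho delta eps : R) (sel : box n -> nat) :
  (forall u, continuous_map (f u)) ->
  pset_sub Om X ->
  (forall b, List.In b G1 -> valid_box b) ->
  (forall b, List.In b G2 -> valid_box b) ->
  (* G1 represents X \ Omega, G2 represents X /\ Omega, G1 u G2 = X *)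
  seteq (boxes_set G2) (fun x => X x /\ Om x) ->
  pset_sub (fun x => X x /\ ~ Om x) (boxes_set G1) ->
  pset_sub (boxes_set G1) X ->
  0 <= delta ->
  (exists x, Win f X Om delta x) ->
  0 < rho ->
  (forall u, inclusion_function (f u) (F u)) ->
  (forall u b, valid_box b -> box_sub b X -> wid (F u b) <= rho * wid b) ->
  sel_ok sel ->
  0 < eps ->
  (exists K, algorithm3 F eps sel X G1 G2 K) /\
  (rho * eps <= delta ->
   forall K, algorithm3 F eps sel X G1 G2 K ->
     pset_sub (Win f X Om delta) (interval_part K) /\
     pset_sub (interval_part K) (Win f X Om 0)).
Proof.
  move=> _ _ HG1v HG2v HG2eq HG1cov HG1X Hd0 _ Hrho0 HF Hrho Hsel Heps.
  split.
  - have [D [HD HinD]] := D_exists Hsel Heps (L := G1 ++ G2)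
      (fun b Hb => match in_app_or _ _ _ Hb with or_introl h => HG1v b h | or_intror h => HG2v b h end).
    have [Kf HK] := @outer_ex n U F eps sel Hsel Heps D HD X G1 G2
      (fun b Hb => conj (HG1v b Hb) (HinD b (in_or_app _ _ _ (or_introl Hb))))
      (fun b Hb => conj (HG2v b Hb) (HinD b (in_or_app _ _ _ (or_intror Hb)))).
    by exists Kf.
  - move=> Hre K HK.
    have [HL HW] := outer_main HF Hrho Hrho0 Hd0 HK
      (fun b Hb => conj (HG1v b Hb) (fun x Hx => HG1X x (ex_intro _ b (conj Hb Hx))))
      (fun b Hb => conj (HG2v b Hb) (fun x Hx => (HG2eq x).1 (ex_intro _ b (conj Hb Hx))))
      (fun x Xx Ox => or_intror (HG1cov x (conj Xx Ox)))
      (fun x Xx Ox => or_intror ((HG2eq x).2 (conj Xx Ox)))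
      (lay_nil F X Om)
      (fun x (Hx : boxes_set [::] x) => match Hx with ex_intro _ (conj Hb _) => match Hb with end end)
      (or_introl (fun x => conj (fun h => h) (fun h => h))).
    split; first exact: HW Hre.
    have [kap Hs] := layered_strat HF HL.
    move=> x Hx. exact: strat_win Hs Hx.
Qed.
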